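(* Let $n\ge1$, let \[P^n=\Big\{x\in[0,4]^n:\sum_{i\in S}x_i+\sum_{i\notin S}(4-x_i)\ge\tfrac12\ \ \forall S\subseteq\{1,\dots,n\}\Big\},\] and let $\mathcal{B}=(B^{o}(4),\dots,B^{o}(4))$ ($n$ copies), where \[B^{o}(u)=\Big\{(x,z)\in\mathbb{R}\times[0,1]^u: x=uz_u+\sum_{j=1}^{u-1}z_j,\ 0\le z_{u-1}\le\dots\le z_1\le1,\ z_1+z_u\le1\Big\}.\] Let $P^n_{\mathcal{B}}=\{(x,z)\in\mathbb{R}^n\times\mathbb{R}^{4n}: x\in P^n,\ (x_i,z_i)\in B^o(4)\text{ for } i=1,\dots,n\}$, with all variables $x$ and $z$ integer. Then there exists a complete branch-and-bound tree with respect to $P^n_{\mathcal{B}}$ having $2^n+n$ leaf nodes.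
   Context: Branch-and-bound (B&B) trees: for a polyhedron $Q$ and its set of integer points $Q^{\mathrm{int}}$ (points of $Q$ whose integer-designated coordinates are integral), a B&B tree is a rooted binary tree whose nodes are labeled by polyhedra: the root is labeled by a box (polyhedron) containing $Q$, and each non-leaf node labeled $D'$ has exactly two children labeled $D'\cap\{y:y_i\le t\}$ and $D'\cap\{y:y_i\ge t+1\}$ for some integer-designated variable $y_i$ and some $t\in\mathbb{Z}$. The tree is complete with respect to $Q$ if $\mathrm{conv}(Q^{\mathrm{int}})=\mathrm{conv}\big(\bigcup_{N\text{ leaf}}(N\cap Q)\big)$. The size of the tree is its number of leaf nodes. *)

(* Defs.v *)
From HB Require Import structures.
From mathcomp Require Import all_boot all_order all_algebra.
From mathcomp Require Import boolp classical_sets reals.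
Set Implicit Arguments.
Unset Strict Implicit.
Unset Printing Implicit Defensive.
Import Order.TTheory GRing.Theory Num.Theory.
Local Open Scope classical_set_scope.
Local Open Scope ring_scope.

(* A node branches on variable i with threshold t : int into
   D /\ {y_i <= t} (left child) and D /\ {y_i >= t+1} (right child). *)
Inductive bbtree (I : Type) :=
| BBLeaf
| BBNode of I & int & bbtree I & bbtree I.
Arguments BBLeaf {I}.

Fixpoint bb_leaves (R : realType) (I : Type) (D : set (I -> R)) (T : bbtree I)
  : seq (set (I -> R)) :=
  match T with
  | BBLeaf => [:: D]
  | BBNode i t l r =>
      bb_leaves (D `&` [set y | y i <= t%:~R]) l
      ++ bb_leaves (D `&` [set y | (t + 1)%:~R <= y i]) r
  end.

Definition bb_size (R : realType) (I : Type) (D : set (I -> R)) (T : bbtree I) : nat :=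
  size (bb_leaves D T).

Definition is_box (R : realType) (I : Type) (D : set (I -> R)) : Prop :=
  exists l u : I -> R, D = [set y | forall i, l i <= y i <= u i].

Definition conv (R : realType) (I : Type) (S : set (I -> R)) : set (I -> R) :=
  [set y | exists (m : nat) (p : 'I_m -> I -> R) (w : 'I_m -> R),
      (forall k, S (p k)) /\ (forall k, 0 <= w k) /\ \sum_(k < m) w k = 1 /\
      (forall i, y i = \sum_(k < m) w k * p k i)].

Definition int_points (R : realType) (I : Type) (Q : set (I -> R)) : set (I -> R) :=
  [set y | Q y /\ forall i, exists z : int, y i = z%:~R].

Definition leaves_cap (R : realType) (I : Type) (L : seq (set (I -> R)))
  (Q : set (I -> R)) : set (I -> R) :=
  [set y | exists2 k, (k < size L)%N & (nth set0 L k `&` Q) y].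

Definition complete_bbtree (R : realType) (I : Type) (Q D : set (I -> R))
  (T : bbtree I) : Prop :=
  is_box D /\ Q `<=` D /\
  conv (int_points Q) = conv (leaves_cap (bb_leaves D T) Q).

(* B^o(u): z is 1-indexed (z 1, ..., z u). *)
Definition Bo (R : realType) (u : nat) (x : R) (z : nat -> R) : Prop :=
  (forall j, (1 <= j <= u)%N -> 0 <= z j <= 1) /\
  x = u%:R * z u + \sum_(1 <= j < u) z j /\
  0 <= z u.-1 /\
  (forall j, (1 <= j)%N -> (j.+1 <= u.-1)%N -> z j.+1 <= z j) /\
  z 1%N <= 1 /\
  z 1%N + z u <= 1.

(* Variables: x_1..x_n (inl i) and z_{i,1..4} (inr (i, j-1)). *)
Definition var (n : nat) := ('I_n + 'I_n * 'I_4)%type.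

Definition Pn (R : realType) (n : nat) (x : 'I_n -> R) : Prop :=
  (forall i, 0 <= x i <= 4) /\
  (forall S : {set 'I_n},
      2^-1 <= \sum_(i in S) x i + \sum_(i in ~: S) (4 - x i)).

Definition PnB (R : realType) (n : nat) : set (var n -> R) :=
  [set y | Pn (fun i => y (inl i)) /\
           forall i : 'I_n, Bo 4 (y (inl i)) (fun j => y (inr (i, inord j.-1)))].

(* Main.v *)
Require Import Defs.
From HB Require Import structures.
From mathcomp Require Import all_boot all_order all_algebra.
From mathcomp Require Import boolp classical_sets reals.
From mathcomp Require Import lra.
Set Implicit Arguments.
Unset Strict Implicit.
Unset Printing Implicit Defensive.
Import Order.TTheory GRing.Theory Num.Theory.
Local Open Scope classical_set_scope.
Local Open Scope ring_scope.

Section Conv.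
Variables (R : realType) (I : Type).
Implicit Types S : set (I -> R).

Lemma conv_pt S y : S y -> conv S y.
Proof.
move=> Sy; exists 1%N, (fun _ => y), (fun _ => 1); split=> //; split=> [k|]; first by [].
split; first by rewrite big_ord1.
by move=> i; rewrite big_ord1 mul1r.
Qed.

Lemma conv_mono S S' : S `<=` S' -> conv S `<=` conv S'.
Proof.
move=> H y [m [p [w [Hp [Hw [Hs Hy]]]]]].
by exists m, p, w; split=> // k; apply: H.
Qed.

Lemma conv_bin S a b t y : conv S a -> conv S b -> 0 <= t <= 1 ->
  (forall i, y i = t * a i + (1 - t) * b i) -> conv S y.
Proof.
move=> [m1 [p1 [w1 [Hp1 [Hw1 [Hs1 Ha]]]]]] [m2 [p2 [w2 [Hp2 [Hw2 [Hs2 Hb]]]]]].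
move=> /andP[t0 t1] Hy.
pose p (k : 'I_(m1 + m2)) := match split k with inl i => p1 i | inr j => p2 j end.
pose w (k : 'I_(m1 + m2)) := match split k with inl i => t * w1 i | inr j => (1 - t) * w2 j end.
have sl : forall i, split (lshift m2 i) = inl i := fun i => unsplitK (inl i).
have sr : forall i, split (rshift m1 i) = inr i := fun i => unsplitK (inr i).
exists (m1 + m2)%N, p, w; split.
  by move=> k; rewrite /p; case: (split k).
split.
  move=> k; rewrite /w; case: (split k) => i; apply: mulr_ge0 => //.
  by rewrite subr_ge0.
split.
  rewrite big_split_ord /w.
  under eq_bigr do rewrite sl.
  under [X in _ + X = _]eq_bigr do rewrite sr.
  by rewrite -!mulr_sumr Hs1 Hs2 !mulr1 addrC subrK.
move=> i; rewrite Hy Ha Hb big_split_ord /w /p.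
under eq_bigr do rewrite sl.
under [X in _ = _ + X]eq_bigr do rewrite sr.
by rewrite !mulr_sumr; congr (_ + _); apply: eq_bigr => k _; rewrite mulrA.
Qed.

Lemma conv_comb S m (w : 'I_m -> R) (p : 'I_m -> I -> R) y :
  (forall k, 0 <= w k) -> \sum_(k < m) w k = 1 ->
  (forall k, w k != 0 -> conv S (p k)) ->
  (forall i, y i = \sum_(k < m) w k * p k i) -> conv S y.
Proof.
elim: m w p y => [|m IH] w p y Hw Hs Hp Hy.
  by move: Hs; rewrite big_ord0 => /eqP; rewrite eq_sym oner_eq0.
move: Hs; rewrite big_ord_recr /= => Hs.
have rest0 : 0 <= \sum_(k < m) w (widen_ord (leqnSn m) k) by apply: sumr_ge0.
have wm1 : w ord_max <= 1 by rewrite -Hs lerDr.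
have [e1|ne1] := eqVneq (w ord_max) 1.
  have z : forall k, w (widen_ord (leqnSn m) k) = 0.
    move=> k; move: Hs; rewrite e1 -{2}(add0r 1) => /addIr /eqP.
    by rewrite psumr_eq0 // => /allP/(_ k (mem_index_enum _))/implyP/(_ isT)/eqP.
  have : conv S (p ord_max) by apply: Hp; rewrite e1 oner_eq0.
  move=> [m' [p' [w' [H1 [H2 [H3 H4]]]]]].
  exists m', p', w'; split; [exact H1|split; [exact H2|split; [exact H3|move=> i]]].
  by rewrite Hy big_ord_recr /= big1 ?add0r ?e1 ?mul1r // => k _; rewrite z mul0r.
have sgt : 0 < 1 - w ord_max by rewrite subr_gt0 lt_neqAle ne1 wm1.
have sne : 1 - w ord_max != 0 by rewrite gt_eqF.
pose y' i := \sum_(k < m) (w (widen_ord (leqnSn m) k) / (1 - w ord_max)) * p (widen_ord (leqnSn m) k) i.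
have Cy' : conv S y'.
  apply: (IH (fun k => w (widen_ord (leqnSn m) k) / (1 - w ord_max)) (fun k => p (widen_ord (leqnSn m) k))).
  - by move=> k; apply: divr_ge0 => //; apply: ltW.
  - rewrite -mulr_suml; apply: (canLR (mulfK sne)); rewrite mul1r.
    by rewrite -Hs addrK.
  - move=> k; rewrite mulf_eq0 negb_or => /andP[H _]; exact: Hp.
  - by [].
have [e0|ne0] := eqVneq (w ord_max) 0.
  move: Cy' => [m' [p' [w' [H1 [H2 [H3 H4]]]]]].
  exists m', p', w'; split; [exact H1|split; [exact H2|split; [exact H3|move=> i]]].
  rewrite Hy big_ord_recr /= e0 mul0r addr0 -H4 /y'.
  by apply: eq_bigr => k _; rewrite e0 subr0 divr1.
apply: (conv_bin (a := y') (b := p ord_max) (t := 1 - w ord_max)) => //.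
  by apply: Hp.
  by rewrite ltW //= lerBlDr lerDl.
move=> i; rewrite Hy big_ord_recr /= opprB addrCA subrr addr0 /y' mulr_sumr.
congr (_ + _); apply: eq_bigr => k _.
by rewrite mulrA mulrCA mulfV // mulr1.
Qed.

Lemma conv_idem S : conv (conv S) `<=` conv S.
Proof.
move=> y [m [p [w [Hp [Hw [Hs Hy]]]]]].
by apply: (conv_comb (w := w) (p := p)).
Qed.
End Conv.
Section P.
Variable R : realType.

Definition BoC (a b c d x : R) := 
  [/\ 0 <= c, c <= b, b <= a, a <= 1 & [/\ 0 <= d, a + d <= 1 & x = 4 * d + a + b + c]].

Lemma Bo_iff x (z : nat -> R) : Bo 4 x z <-> BoC (z 1%N) (z 2%N) (z 3%N) (z 4%N) x.
Proof.
have E : \sum_(1 <= j < 4) z j = z 1%N + z 2%N + z 3%N.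
  by rewrite big_ltn // big_ltn // big_ltn // big_geq // addr0 !addrA.
rewrite /Bo E; split.
  move=> [H1 [Hx [H3 [H4 [H5 H6]]]]].
  have h1 := H4 1%N isT isT; have h2 := H4 2%N isT isT.
  have /andP[h4 _] := H1 4%N isT.
  by split; [exact H3|exact h2|exact h1|exact H5|split; [exact h4|exact H6|rewrite Hx !addrA]].
move=> [c0 cb ba a1 [d0 ad ->]].
set a := z 1%N; set b := z 2%N; set c := z 3%N; set d := z 4%N.
split.
  by move=> [|[|[|[|[|j]]]]] //= _; apply/andP; split; lra.
split; first by rewrite !addrA.
split=> //; split; last by split.
by move=> [|[|[|j]]].
Qed.

Variable n : nat.
Notation V := (var n).

Definition xv (i : 'I_n) : V := inl i.
Definition zv (i : 'I_n) (j : nat) : V := inr (i, inord j).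
Definition blk (y : V -> R) i :=
  BoC (y (zv i 0)) (y (zv i 1)) (y (zv i 2)) (y (zv i 3)) (y (xv i)).

Lemma PnB_iff y : @PnB R n y <-> Pn (fun i => y (inl i)) /\ forall i, blk y i.
Proof.
rewrite /PnB /=; split=> [[H1 H2]|[H1 H2]]; split=> // i.
  exact/(Bo_iff (y (inl i)) (fun j => y (inr (i, inord j.-1))))/H2.
exact/(Bo_iff (y (inl i)) (fun j => y (inr (i, inord j.-1))))/H2.
Qed.

Lemma blk_x y i : blk y i -> 0 <= y (xv i) <= 4.
Proof. by move=> [c0 cb ba a1 [d0 ad ->]]; apply/andP; split; lra. Qed.

Definition W : set (V -> R) :=
  [set y | (forall i, blk y i) /\ exists j, y (zv j 0) = 1].

Lemma W_PnB : W `<=` @PnB R n.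
Proof.
move=> y [Hb [j Hj]]; apply/PnB_iff; split=> //; split.
  by move=> i; apply: blk_x.
have [c0 cb ba a1 [d0 ad ex]] := Hb j.
rewrite Hj in ba a1 ad ex.
have xj1 : 1 <= y (inl j) <= 3 by rewrite -/(xv j) ex; apply/andP; split; lra.
have pos1 : forall P : pred 'I_n, 0 <= \sum_(i | P i) y (inl i).
  by move=> P; apply: sumr_ge0 => i _; have /andP[] := blk_x (Hb i).
have pos2 : forall P : pred 'I_n, 0 <= \sum_(i | P i) (4 - y (inl i)).
  by move=> P; apply: sumr_ge0 => i _; have /andP[_ h] := blk_x (Hb i); lra.
move=> S; case: (boolP (j \in S)) => jS.
  rewrite (bigD1 j) //=.
  have := pos2 (fun i => i \in ~: S); have := pos1 (fun i => (i \in S) && (i != j)).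
  simpl; lra.
rewrite [X in _ <= _ + X](bigD1 j) ?inE //=.
have := pos1 (fun i => i \in S); have := pos2 (fun i => (i \in ~: S) && (i != j)).
simpl; lra.
Qed.

Definition vz (k : 'I_5) (j : nat) : R :=
  if (k == 4%N :> nat) then (j == 3%N)%:R else (j < k)%N%:R.

Definition upd (y : V -> R) (i : 'I_n) (k : 'I_5) : V -> R :=
  fun v => match v with
  | inl i' => if i' == i then (k : nat)%:R else y v
  | inr (i', j) => if i' == i then vz k j else y v
  end.

Definition wt (y : V -> R) (i : 'I_n) (k : 'I_5) : R :=
  let a := y (zv i 0) in let b := y (zv i 1) in
  let c := y (zv i 2) in let d := y (zv i 3) in
  match (k : nat) with
  | 0 => 1 - a - d | 1 => a - b | 2 => b - c | 3 => c | _ => d end.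

Lemma wt_sum y i : \sum_(k < 5) wt y i k = 1.
Proof. rewrite !big_ord_recl big_ord0 /=. rewrite /wt /=. lra. Qed.

Lemma wt_ge0 y i k : blk y i -> 0 <= wt y i k.
Proof.
move=> [c0 cb ba a1 [d0 ad ex]].
by case: k => [[|[|[|[|[|?]]]]] ?] //=; rewrite /wt /=; lra.
Qed.

Lemma decomp y i : blk y i -> forall v, y v = \sum_(k < 5) wt y i k * upd y i k v.
Proof.
move=> Hb v; case: v => [i'|[i' j]] /=; case: eqP => [->|ne].
- move: Hb => [c0 cb ba a1 [d0 ad ex]].
  rewrite !big_ord_recl big_ord0 /= /wt /= -/(xv i) ex. rewrite /bump /=. lra.
- by rewrite -big_distrl /= wt_sum mul1r.
- move: Hb => [c0 cb ba a1 [d0 ad ex]].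
  case: j => m Hm.
  have E : Ordinal Hm = inord m by apply/val_inj; rewrite /= inordK.
  rewrite !big_ord_recl big_ord0 /= /wt /vz /=.
  rewrite E; move: Hm E; case: m => [|[|[|[|m]]]] // _ _ /=; rewrite -/(zv i _); lra.
- by rewrite -big_distrl /= wt_sum mul1r.
Qed.

Lemma upd_zo y i k i' m : i' != i -> upd y i k (zv i' m) = y (zv i' m).
Proof. by rewrite /upd /zv => /negbTE ->. Qed.
Lemma upd_xo y i k i' : i' != i -> upd y i k (xv i') = y (xv i').
Proof. by rewrite /upd /xv => /negbTE ->. Qed.
Lemma upd_zs y i k m : (m < 4)%N -> upd y i k (zv i m) = vz k m.
Proof. by move=> hm; rewrite /upd /zv eqxx inordK. Qed.
Lemma upd_xs y i k : upd y i k (xv i) = (k : nat)%:R.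
Proof. by rewrite /upd /xv eqxx. Qed.

Lemma blk_upd_o y i k i' : i' != i -> blk (upd y i k) i' <-> blk y i'.
Proof. by move=> ne; rewrite /blk !upd_zo // upd_xo. Qed.

Lemma blk_upd_s y i k : blk (upd y i k) i.
Proof.
rewrite /blk !upd_zs // upd_xs /vz.
by case: k => [[|[|[|[|[|?]]]]] ?] //=; split; rewrite ?mulr0 ?addr0 ?add0r //; try lra; split; lra.
Qed.

Lemma upd_W y i k : W y -> wt y i k != 0 -> W (upd y i k).
Proof.
move=> [Hb [j Hj]] hw; split.
  move=> i'; have [->|ne] := eqVneq i' i; first exact: blk_upd_s.
  by apply/blk_upd_o.
have [ej|ne] := eqVneq j i; last by exists j; rewrite upd_zo.
subst j; exists i; rewrite upd_zs // /vz.
have [c0 cb ba a1 [d0 ad ex]] := Hb i.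
move: hw; rewrite /wt Hj /=.
case: k => [[|[|[|[|[|?]]]]] ?] //= hw; try (exfalso; move: hw; apply/negP; rewrite negbK; apply/eqP; lra).
Qed.

Definition isint (r : R) := exists z : int, r = z%:~R.
Definition blkint (y : V -> R) i := isint (y (xv i)) /\ forall j : 'I_4, isint (y (inr (i, j))).

Lemma isint_nat (m : nat) : isint m%:R.
Proof. by exists m%:Z; rewrite -pmulrn. Qed.

Lemma blkint_upd_s y i k : blkint (upd y i k) i.
Proof.
split; first by rewrite upd_xs; apply: isint_nat.
by move=> j; rewrite /upd eqxx /vz; case: ifP => _; apply: isint_nat.
Qed.

Lemma blkint_upd_o y i k i' : i' != i -> blkint y i' -> blkint (upd y i k) i'.
Proof.
move=> ne [h1 h2]; split; first by rewrite upd_xo.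
by move=> j; rewrite /upd (negbTE ne); apply: h2.
Qed.

Lemma W_conv_ind m : forall y, W y -> (forall i : 'I_n, (m <= i)%N -> blkint y i) ->
  conv (int_points (@PnB R n)) y.
Proof.
elim: m => [|m IH] y Wy Hi.
  apply: conv_pt; split; first exact: W_PnB.
  by case=> [i|[i j]]; [exact: (Hi i isT).1 | exact: (Hi i isT).2 j].
case: (ltnP m n) => hm; last first.
  apply: IH => // i hi; exfalso; move: (ltn_ord i); rewrite ltnNge.
  by rewrite (leq_trans hm hi).
pose i := Ordinal hm.
have Hb := Wy.1 i.
apply: (conv_comb (w := wt y i) (p := upd y i)).
- by move=> k; apply: wt_ge0.
- exact: wt_sum.
- move=> k hk; apply: IH; first exact: upd_W.
  move=> i' hi'; have [->|ne] := eqVneq i' i; first exact: blkint_upd_s.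
  apply: blkint_upd_o => //; apply: Hi; rewrite ltn_neqAle hi' andbT.
  by apply: contra ne => /eqP e; apply/eqP/val_inj.
- exact: decomp.
Qed.

Lemma W_conv : W `<=` conv (int_points (@PnB R n)).
Proof. by move=> y Wy; apply: (W_conv_ind (m := n)) => // i; rewrite leqNgt ltn_ord. Qed.

Lemma corner y : @PnB R n y ->
  (forall i, y (zv i 0) <= 0 /\ (y (zv i 3) <= 0 \/ 1 <= y (zv i 3))) -> False.
Proof.
move=> /PnB_iff [[_ HS] Hb] Hc.
have xi : forall i, y (xv i) = 0 \/ y (xv i) = 4.
  move=> i; have [c0 cb ba a1 [d0 ad ex]] := Hb i.
  have [h0 [h3|h3]] := Hc i; [left|right]; lra.
have := HS [set i | y (xv i) == 0]%SET.
rewrite big1; last by move=> i; rewrite inE => /eqP.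
rewrite big1; last first.
  move=> i; rewrite !inE => /eqP ne; case: (xi i) => e; first by [].
  by rewrite /xv in e; rewrite e subrr.
lra.
Qed.

Fixpoint Cz (s : seq 'I_n) : bbtree V :=
  match s with [::] => BBLeaf | i :: s' => BBNode (zv i 3) 0 (Cz s') (Cz s') end.
Fixpoint Tz (s : seq 'I_n) : bbtree V :=
  match s with [::] => Cz (enum 'I_n) | i :: s' => BBNode (zv i 0) 0 (Tz s') BBLeaf end.

Lemma size_Cz (L : set (V -> R)) s : size (bb_leaves L (Cz s)) = (2 ^ size s)%N.
Proof. by elim: s L => [|i s IH] L //=; rewrite size_cat !IH expnS mul2n addnn. Qed.

Lemma size_Tz (L : set (V -> R)) s : size (bb_leaves L (Tz s)) = (size s + 2 ^ n)%N.
Proof.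
elim: s L => [|i s IH] L /=; first by rewrite size_Cz size_enum_ord.
by rewrite size_cat IH addn1 addSn.
Qed.

Definition allL (s : seq (set (V -> R))) (P : set (V -> R) -> Prop) :=
  forall k, (k < size s)%N -> P (nth set0 s k).

Lemma allL_cat s1 s2 P : allL s1 P -> allL s2 P -> allL (s1 ++ s2) P.
Proof.
move=> h1 h2 k; rewrite size_cat nth_cat => hs; case: (ltnP k (size s1)) => hk.
  exact: h1.
by apply: h2; rewrite -(ltn_add2l (size s1)) subnKC.
Qed.

Lemma Cz_ok s (L : set (V -> R)) :
  L `<=` [set y | forall i, y (zv i 0) <= 0 /\ (i \notin s -> y (zv i 3) <= 0 \/ 1 <= y (zv i 3))] ->
  allL (bb_leaves L (Cz s)) (fun N => N `&` @PnB R n `<=` W).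
Proof.
elim: s L => [|i s IH] L HL /=.
  move=> [|k] //= _ y [Ly Qy]; exfalso; apply: (corner Qy) => i.
  by have [h1 h2] := HL y Ly i; split => //; apply: h2.
apply: allL_cat; apply: IH => y [Ly h] i'; have [h1 h2] := HL y Ly i'; split=> // hi'.
  have [->|ne] := eqVneq i' i; first by left; move: h; rewrite /=.
  by apply: h2; rewrite inE negb_or ne.
have [->|ne] := eqVneq i' i; first by right; move: h; rewrite /=.
by apply: h2; rewrite inE negb_or ne.
Qed.

Lemma Tz_ok s (L : set (V -> R)) :
  L `<=` [set y | forall i, i \notin s -> y (zv i 0) <= 0] ->
  allL (bb_leaves L (Tz s)) (fun N => N `&` @PnB R n `<=` W).
Proof.
elim: s L => [|i s IH] L HL /=.
  apply: Cz_ok => y Ly i; split; first by apply: HL.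
  by rewrite mem_enum.
apply: allL_cat.
  apply: IH => y [Ly h] i'; have [->|ne] := eqVneq i' i; first by move: h; rewrite /=.
  by move=> hi'; apply: HL => //; rewrite inE negb_or ne.
move=> [|k] //= _ y [[Ly h] Qy].
have [_ Hb] := (PnB_iff y).1 Qy.
split=> //; exists i; have [c0 cb ba a1 [d0 ad ex]] := Hb i.
by apply/le_anti; rewrite a1 /=; move: h; rewrite /=.
Qed.

End P.

Lemma leaves_cover (R : realType) (I : Type) (T : bbtree I) (L : set (I -> R)) y :
  L y -> (forall v, exists z : int, y v = z%:~R) ->
  exists2 k, (k < size (bb_leaves L T))%N & nth set0 (bb_leaves L T) k y.
Proof.
elim: T L => [|v t l IHl r IHr] L Ly Hi /=; first by exists 0%N.
have [z ez] := Hi v.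
case: (lerP z t) => hz.
  have Ly' : (L `&` [set y | y v <= t%:~R]) y by split=> //=; rewrite ez ler_int.
  have [k hk Nk] := IHl _ Ly' Hi.
  exists k; first by rewrite size_cat ltn_addr.
  by rewrite nth_cat hk.
have Ly' : (L `&` [set y | (t + 1)%:~R <= y v]) y.
  by split=> //=; rewrite ez ler_int lezD1.
have [k hk Nk] := IHr _ Ly' Hi.
exists (addn (size (bb_leaves (L `&` [set y0 | y0 v <= t%:~R]) l)) k).
  by rewrite size_cat ltn_add2l.
by rewrite nth_cat ltnNge leq_addr /= addKn.
Qed.

Theorem proposition6 (R : realType) (n : nat) (hn : (1 <= n)%N) :
  exists (D : set (var n -> R)) (T : bbtree (var n)),
    complete_bbtree (@PnB R n) D T /\ bb_size D T = (2 ^ n + n)%N.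
Proof.
pose D : set (var n -> R) := [set y | forall v, 0 <= y v <= 4].
have QD : @PnB R n `<=` D.
  move=> y /PnB_iff [[Hx _] Hb] [i|[i j]]; first exact: Hx.
  have [c0 cb ba a1 [d0 ad ex]] := Hb i.
  case: j => m Hm.
  have E : Ordinal Hm = inord m by apply/val_inj; rewrite /= inordK.
  rewrite E; move: Hm E; case: m => [|[|[|[|m]]]] // _ _ /=;
    rewrite -/(zv i _); apply/andP; split; lra.
exists D, (Tz (enum 'I_n)); split; last first.
  by rewrite /bb_size size_Tz size_enum_ord addnC.
split; first by exists (fun _ => 0), (fun _ => 4).
split=> //.
apply/seteqP; split.
  apply: conv_mono => y [Qy Hi].
  have [k hk Nk] := leaves_cover (Tz (enum 'I_n)) (QD y Qy) Hi.
  by exists k.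
apply: subset_trans (@conv_idem R (var n) (int_points (@PnB R n))).
apply: conv_mono => y [k hk Nk].
apply: W_conv.
apply: (Tz_ok (s := enum 'I_n) (L := D)) hk y Nk.
by move=> y' _ i; rewrite mem_enum.
Qed.
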